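(* Let $G$ be a finite group and suppose $G$ has a subgroup $H$ admitting a nontrivial homomorphism $\phi: H \to \{\pm 1\}$. Then there is a function $f: G \to \{\pm 1\}$ with $\mathbb{E}_{x\in G} f(x) = 0$ and \[ \Pr_{x,y}\,[f(x)f(y) = f(xy)] \ge \frac{1}{2}\left(1 + \frac{1}{2}\frac{|H|}{|G|}\left(1 - \frac{|N(H)|}{|G|}\right) + \frac{|H|^2}{|G|^2}\right), \] where $x,y$ are chosen uniformly and independently from $G$ and $N(H) = \{c \in G : cHc^{-1} = H\}$ is the normalizer of $H$ in $G$.
   Context: $\mathbb{E}$ denotes the average over the uniform distribution on $G$. *)

(* Defs.v *)
From mathcomp Require Import all_boot all_order all_algebra all_fingroup.
Set Implicit Arguments. Unset Strict Implicit. Unset Printing Implicit Defensive.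
Import GRing.Theory Num.Theory.
Local Open Scope ring_scope.

(* {+-1} is modelled as the subset {1, -1} of the multiplicative monoid of rat. *)
Definition pm1 (r : rat) : bool := (r == 1) || (r == -1).

(* phi : H -> {+-1} is a group homomorphism (values outside H are irrelevant). *)
Definition pm1_hom (gT : finGroupType) (H : {set gT}) (phi : gT -> rat) : Prop :=
  (forall x, x \in H -> pm1 (phi x)) /\
  (forall x y, x \in H -> y \in H -> phi (x * y)%g = phi x * phi y).

Definition nontrivial_on (gT : finGroupType) (H : {set gT}) (phi : gT -> rat) : Prop :=
  exists2 x, x \in H & phi x != 1.

Definition avg (gT : finGroupType) (G : {set gT}) (f : gT -> rat) : rat :=
  (\sum_(x in G) f x) / #|G|%:R.

Definition hom_prob (gT : finGroupType) (G : {set gT}) (f : gT -> rat) : rat :=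
  #|[set p : gT * gT | (p.1 \in G) && (p.2 \in G) && (f p.1 * f p.2 == f (p.1 * p.2)%g)]|%:R
  / (#|G| * #|G|)%:R.

(* Main.v *)
Set Warnings "-notation-overridden,-ambiguous-paths".
Set Implicit Arguments. Unset Strict Implicit.
Require Import Defs.
From mathcomp Require Import all_boot all_order all_algebra all_fingroup.
From mathcomp Require Import lra ring zify.
Import Order.TTheory GRing.Theory Num.Theory.
Local Open Scope ring_scope.

Lemma pm1_sq (r : rat) : pm1 r -> r * r = 1.
Proof. by case/orP=> /eqP->; rewrite ?mulr1 ?mulrNN ?mulr1. Qed.

Lemma pm1M a b : pm1 a -> pm1 b -> pm1 (a*b).
Proof.
by case/orP=>/eqP-> ; case/orP=>/eqP->; rewrite /pm1 ?mulr1 ?mulrN1 ?mul1r ?mulN1r ?opprK ?eqxx ?orbT.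
Qed.

Lemma pm1_neq1 r : pm1 r -> r != 1 -> r = -1.
Proof. by case/orP=>/eqP->; rewrite ?eqxx. Qed.

Lemma twice0 (S : rat) : S = - S -> S = 0.
Proof. move=> h; have : S + S = 0 by rewrite {2}h subrr. lra. Qed.

Lemma sum_flip0 (gT : finGroupType) (G : {group gT}) k (F : gT -> rat) :
  k \in G -> (forall x, x \in G -> F (k * x)%g = - F x) -> \sum_(x in G) F x = 0.
Proof.
move=> kG hF; apply: twice0.
rewrite {1}(reindex_inj (mulgI k)) /= (eq_bigl (fun x => x \in G)); last first.
  by move=> x; rewrite groupMl.
rewrite -sumrN; apply: eq_bigr => x xG; exact: hF.
Qed.

Lemma sum_invol0 (T : finType) (t : T -> T) (F : T -> rat) :
  involutive t -> (forall s, F (t s) = - F s) -> \sum_s F s = 0.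
Proof.
move=> it hF; apply: twice0.
rewrite {1}(reindex_inj (inv_inj it)) /= -sumrN; apply: eq_bigr => s _; exact: hF.
Qed.

Lemma char_sum_ge0 (gT : finGroupType) (L : {group gT}) (chi : gT -> rat) :
  (forall x, x \in L -> pm1 (chi x)) ->
  (forall x y, x \in L -> y \in L -> chi (x*y)%g = chi x * chi y) ->
  0 <= \sum_(x in L) chi x.
Proof.
move=> hp hm.
case: (boolP [forall x in L, chi x == 1]) => [/forall_inP h1 | /forall_inPn [z zL nz]].
  rewrite (eq_bigr (fun _ => 1)); last by move=> x /h1/eqP.
  by rewrite sumr_const ler0n.
rewrite (@sum_flip0 _ _ z) // => x xL.
by rewrite hm // (pm1_neq1 (hp z zL) nz) mulN1r.
Qed.
Definition sg (b : bool) : rat := if b then 1 else -1.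
Definition uf (gT : finGroupType) (H : {group gT}) (phi : gT -> rat)
  (s : {ffun {set gT} -> bool}) (x : gT) : rat :=
  phi (x * (repr (H :* x)%g)^-1)%g * sg (s (H :* x)%g).
Definition ff (gT : finGroupType) (H : {group gT}) (phi : gT -> rat)
  (s : {ffun {set gT} -> bool}) (x : gT) : rat :=
  if x \in H then phi x else uf H phi s x.
Definition W (gT : finGroupType) (H : {group gT}) (phi : gT -> rat) (a b : gT) : rat :=
  if (b * a^-1)%g \in H then phi (b * a^-1)%g else 0.

Lemma repr_in (gT : finGroupType) (H : {group gT}) x : (x * (repr (H :* x)%g)^-1)%g \in H.
Proof.
have := mem_repr_rcoset H x; rewrite mem_rcoset => h.
by rewrite -groupV invMg invgK.
Qed.

Lemma sg_pm1 b : pm1 (sg b).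
Proof. by case: b; rewrite /pm1 eqxx ?orbT. Qed.

Lemma uf_pm1 gT (H : {group gT}) phi s x : pm1_hom H phi -> pm1 (uf H phi s x).
Proof. by case=> hp _; apply: pm1M; [apply: hp; apply: repr_in | apply: sg_pm1]. Qed.

Lemma ff_pm1 gT (H : {group gT}) phi s x : pm1_hom H phi -> pm1 (ff H phi s x).
Proof. move=> hh; rewrite /ff; case: ifP => xH; last exact: uf_pm1. by case: hh => hp _; apply: hp. Qed.

Lemma rcoset_shift gT (H : {group gT}) (a b : gT) : (b * a^-1)%g \in H -> (H :* b = H :* a)%g.
Proof.
move=> h; have -> : b = (b * a^-1 * a)%g by rewrite mulgKV.
by rewrite rcosetM (rcoset_id h).
Qed.

Lemma uf_shift gT (H : {group gT}) phi s (a b : gT) : pm1_hom H phi ->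
  (b * a^-1)%g \in H -> uf H phi s b = phi (b * a^-1)%g * uf H phi s a.
Proof.
move=> [_ hm] h; rewrite /uf (rcoset_shift h) mulrA -hm //; last exact: repr_in.
rewrite -(rcoset_shift h) !mulgA mulgKV //.
Qed.

Lemma uf_sq gT (H : {group gT}) phi s a : pm1_hom H phi -> uf H phi s a * uf H phi s a = 1.
Proof. by move=> hh; apply: pm1_sq; apply: uf_pm1. Qed.

Notation FF gT := {ffun {set gT} -> bool}.

Lemma sgN b : sg (~~ b) = - sg b.
Proof. by case: b; rewrite /= ?opprK. Qed.

Lemma rcoset_eq_in gT (H : {group gT}) (a b : gT) : (H :* b = H :* a)%g -> (b * a^-1)%g \in H.
Proof. by move=> e; rewrite -mem_rcoset -e rcoset_refl. Qed.

Lemma sum_pair gT (H : {group gT}) phi (a b : gT) : pm1_hom H phi ->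
  \sum_(s : FF gT) uf H phi s a * uf H phi s b = #|FF gT|%:R * W H phi a b.
Proof.
move=> hh; rewrite /W; case: ifP => h.
  under eq_bigr => s _ do rewrite (uf_shift _ hh h) mulrCA uf_sq // mulr1.
  by rewrite sumr_const mulr_natl.
rewrite mulr0.
apply: (@sum_invol0 _ (fun s : FF gT => [ffun C => if C == (H :* a)%g then ~~ s C else s C]) (fun s => uf H phi s a * uf H phi s b)).
  by move=> s; apply/ffunP => C; rewrite !ffunE; case: eqP => _; rewrite ?negbK.
move=> s; rewrite /uf !ffunE eqxx.
have -> : ((H :* b)%g == (H :* a)%g) = false.
  by apply/negbTE/eqP => /rcoset_eq_in; rewrite h.
by rewrite sgN mulrN mulNr.
Qed.

Lemma sum_triple gT (H : {group gT}) phi (a b c : gT) :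
  \sum_(s : FF gT) uf H phi s a * uf H phi s b * uf H phi s c = 0.
Proof.
apply: (@sum_invol0 _ (fun s : FF gT => [ffun C => ~~ s C]) (fun s => uf H phi s a * uf H phi s b * uf H phi s c)).
  by move=> s; apply/ffunP => C; rewrite !ffunE negbK.
by move=> s; rewrite /uf !ffunE !sgN !mulrN !mulNr opprK.
Qed.

Definition Tf gT (H : {group gT}) (phi : gT -> rat) (x y : gT) : rat :=
  if x \in H then (if y \in H then 1 else phi x * W H phi y (x*y)%g)
  else if y \in H then phi y * W H phi x (x*y)%g
  else if (x*y)%g \in H then phi (x*y)%g * W H phi x y else 0.

Lemma pointwise gT (H : {group gT}) phi (x y : gT) : pm1_hom H phi ->
  \sum_(s : FF gT) ff H phi s x * ff H phi s y * ff H phi s (x*y)%g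
  = #|FF gT|%:R * Tf H phi x y.
Proof.
move=> hh; have [hp hm] := hh; rewrite /Tf /ff.
case: (boolP (x \in H)) => xH.
  case: (boolP (y \in H)) => yH.
    rewrite groupM //.
    under eq_bigr => s _ do rewrite -hm // pm1_sq ?hp ?groupM //.
    by rewrite sumr_const mulr1.
  rewrite (groupMl y xH) ?(negbTE yH).
  under eq_bigr => s _ do rewrite -mulrA.
  by rewrite -mulr_sumr sum_pair // mulrCA.
case: (boolP (y \in H)) => yH.
  rewrite (groupMr x yH) ?(negbTE xH).
  under eq_bigr => s _ do rewrite mulrAC mulrC.
  by rewrite -mulr_sumr sum_pair // mulrCA.
rewrite ?(negbTE xH) ?(negbTE yH).
case: (boolP ((x*y)%g \in H)) => xyH.
  under eq_bigr => s _ do rewrite mulrC.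
  by rewrite -mulr_sumr sum_pair // mulrCA.
by rewrite sum_triple mulr0.
Qed.

Lemma rowH gT (G H : {group gT}) phi x : pm1_hom H phi -> H \subset G -> x \in H ->
  \sum_(y in G) Tf H phi x y = #|G|%:R.
Proof.
move=> [hp hm] sHG xH; rewrite -[#|G|]/#|mem G| -sumr_const; apply: eq_bigr => y _.
rewrite /Tf xH; case: ifP => // _.
by rewrite /W mulgK xH pm1_sq ?hp.
Qed.

Lemma conj_inv (gT : finGroupType) (x y : gT) : (y ^ x^-1)%g = (x * y * x^-1)%g.
Proof. by rewrite conjgE invgK mulgA. Qed.

Lemma b_ge0 gT (G H : {group gT}) phi x : pm1_hom H phi -> H \subset G ->
  0 <= \sum_(y in G | y \in H) phi y * W H phi x (x * y)%g.
Proof.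
move=> [hp hm] sHG.
rewrite (bigID (fun y => y \in (H :^ x)%g)) /=.
rewrite [X in _ + X]big1 ?addr0; last first.
  move=> y /andP [_ yHx]; rewrite /W.
  by rewrite mem_conjg conj_inv in yHx; rewrite (negbTE yHx) mulr0.
have -> : \sum_(y | ((y \in G) && (y \in H)) && (y \in (H :^ x)%g)) phi y * W H phi x (x * y)%g
   = \sum_(y in (H :&: H :^ x)%G) phi y * phi (y ^ x^-1)%g.
  apply: eq_big => y.
    rewrite /= !inE; case yH: (y \in H); rewrite ?andbF ?andbT //=.
    by rewrite (subsetP sHG _ yH).
  move=> /andP [/andP [_ yH]]; rewrite mem_conjg conj_inv => yx.
  by rewrite /W yx.
apply: char_sum_ge0 => [y | y z].
  by rewrite /= !inE mem_conjg => /andP [yH yx]; apply: pm1M; apply: hp.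
rewrite /= !inE !mem_conjg => /andP [yH yx] /andP [zH zx].
rewrite conjMg hm // hm //.
by rewrite mulrACA.
Qed.

Lemma cardK_le gT (H : {group gT}) (x : gT) :
  (#|[set y | ((x*y)%g \in H) && ((y * x^-1)%g \in H)]| <= #|(H :&: H :^ x)%G|)%N.
Proof.
set K := [set y | _].
case: (set_0Vmem K) => [-> | [y0 y0K]]; first by rewrite cards0.
rewrite -(card_rcoset (H :&: H :^ x)%g y0); apply: subset_leq_card; apply/subsetP => y yK.
rewrite mem_rcoset /= !inE mem_conjg conj_inv.
move: yK y0K; rewrite !inE => /andP [h1 h2] /andP [h3 h4].
apply/andP; split.
  have -> : (y * y0^-1 = (y * x^-1) * (y0 * x^-1)^-1)%g by rewrite invMg invgK mulgA mulgKV.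
  by rewrite groupM ?groupV.
have -> : (x * (y * y0^-1) * x^-1 = (x*y) * (x * y0)^-1)%g by rewrite invMg !mulgA.
by rewrite groupM ?groupV.
Qed.

Lemma cardL_le gT (H : {group gT}) (x : gT) : (#|(H :&: H :^ x)%G| <= #|H|)%N.
Proof. by apply: subset_leq_card; apply: subsetIl. Qed.

Lemma cardL_half gT (H : {group gT}) (x : gT) : x \notin 'N(H)%g ->
  (2 * #|(H :&: H :^ x)%G| <= #|H|)%N.
Proof.
move=> xN.
have sLH : (H :&: H :^ x)%G \subset H by apply: subsetIl.
have /dvdnP [k hk] := cardSg sLH.
have L0 := cardG_gt0 (H :&: H :^ x)%G.
have neq : #|(H :&: H :^ x)%G| != #|H|.
  apply/eqP => e; move/negP: xN; apply; apply/normP.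
  have eLH : (H :&: H :^ x)%G == H :> {set gT} by rewrite eqEcard sLH e leqnn.
  apply/esym/eqP; rewrite eqEcard cardJg leqnn andbT.
  rewrite -{1}(eqP eLH) /=; exact: subsetIr.
case: k hk => [|[|k]] hk.
- by move: (cardG_gt0 H); rewrite hk.
- by rewrite hk mul1n eqxx in neq.
- rewrite hk; rewrite !mulSn; lia.
Qed.

Lemma pm1_ge (r : rat) : pm1 r -> -1 <= r.
Proof. by case/orP=> /eqP->; rewrite ?lexx // lerN10. Qed.

Lemma row_nonH gT (G H : {group gT}) phi x : pm1_hom H phi -> H \subset G -> x \notin H ->
  - (#|(H :&: H :^ x)%G|%:R) <= \sum_(y in G) Tf H phi x y.
Proof.
move=> hh sHG xH; have [hp hm] := hh.
rewrite (bigID (fun y => y \in H)) /=.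
have -> : \sum_(y in G | y \in H) Tf H phi x y = \sum_(y in G | y \in H) phi y * W H phi x (x * y)%g.
  by apply: eq_bigr => y /andP [_ yH]; rewrite /Tf (negbTE xH) yH.
set K := [set y | ((x*y)%g \in H) && ((y * x^-1)%g \in H)].
have hK : - (#|K|%:R) <= \sum_(y in G | y \notin H) Tf H phi x y.
  apply: (@le_trans _ _ (\sum_(y in G | y \notin H) - (if y \in K then 1 else 0 : rat))).
    rewrite sumrN lerN2.
    rewrite -sumr_const /= [X in _ <= X]big_mkcond /= [X in X <= _]big_mkcond /=.
    rewrite [X in _ <= X]big_mkcond /=.
    apply: ler_sum => y _; case: (y \in G); case: (y \notin H); case: (y \in K) => //=.
  apply: ler_sum => y /andP [_ yH].
  rewrite /Tf (negbTE xH) (negbTE yH) inE.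
  case xyH: ((x * y)%g \in H) => /=; last by rewrite lexx.
  rewrite /W; case yxH: ((y * x^-1)%g \in H) => /=.
    by apply: pm1_ge; apply: pm1M; apply: hp.
  by rewrite mulr0 oppr_le0.
have := cardK_le H x; rewrite -/K -(ler_nat rat) => hc.
have := b_ge0 x hh sHG.
lra.
Qed.

Lemma row_bound gT (G H : {group gT}) phi x : pm1_hom H phi -> H \subset G -> x \in G ->
  (if x \in H then #|G|%:R + #|H|%:R else 0) - #|H|%:R / 2
   - (if x \in 'N(H)%g then #|H|%:R / 2 else 0) <= \sum_(y in G) Tf H phi x y.
Proof.
move=> hh sHG xG.
case: (boolP (x \in H)) => xH.
  rewrite (rowH hh sHG xH) (subsetP (normG H) _ xH); move: (#|G|%:R) (#|H|%:R) => a b; lra.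
have h1 := row_nonH hh sHG xH.
have := cardL_le H x; rewrite -(ler_nat rat) => h2.
case: (boolP (x \in 'N(H)%g)) => xN; first lra.
have := cardL_half xN; rewrite -(ler_nat rat) natrM => h3.
lra.
Qed.

Lemma sum_ind gT (G A : {set gT}) (c : rat) :
  \sum_(x in G) (if x \in A then c else 0) = #|G :&: A|%:R * c.
Proof.
rewrite -big_mkcondr /= (eq_bigl (fun i => i \in G :&: A)); last by move=> i; rewrite inE.
by rewrite sumr_const mulr_natl.
Qed.

Lemma total_bound gT (G H : {group gT}) phi : pm1_hom H phi -> H \subset G ->
  #|H|%:R ^+ 2 + #|H|%:R * (#|G|%:R - #|('N_G(H))%g|%:R) / 2
   <= \sum_(x in G) \sum_(y in G) Tf H phi x y.
Proof.
move=> hh sHG.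
apply: le_trans (ler_sum _ (fun x xG => row_bound hh sHG xG)).
rewrite !sumrB !sum_ind sumr_const (setIidPr sHG).
rewrite -[(#|H|%:R / 2) *+ _]mulr_natl.
rewrite -[#|mem G|]/#|G|.
set g := #|G|%:R; set h := #|H|%:R; set n := #|('N_G(H))%g|%:R.
move: g h n => g h n; lra.
Qed.

Lemma ind_eq (a b c : rat) : pm1 a -> pm1 b -> pm1 c ->
  (if a * b == c then 1 else 0) = (1 + a * b * c) / 2.
Proof.
have n1 : ((-1 : rat) == 1) = false by [].
have n2 : ((1 : rat) == -1) = false by [].
by case/orP=>/eqP->; case/orP=>/eqP->; case/orP=>/eqP->;
  rewrite ?mulr1 ?mul1r ?mulrN1 ?mulN1r ?opprK ?eqxx ?n1 ?n2; lra.
Qed.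

Lemma count_eq gT (G : {group gT}) (f : gT -> rat) : (forall x, x \in G -> pm1 (f x)) ->
  #|[set p : gT * gT | (p.1 \in G) && (p.2 \in G) && (f p.1 * f p.2 == f (p.1 * p.2)%g)]|%:R
  = (#|G|%:R * #|G|%:R + \sum_(x in G) \sum_(y in G) f x * f y * f (x * y)%g) / 2.
Proof.
move=> hf.
rewrite -[LHS]mulr1 -mulr_natl -sumr_const.
rewrite (eq_bigl (fun p : gT * gT => ((p.1 \in G) && (p.2 \in G)) && (f p.1 * f p.2 == f (p.1 * p.2)%g))); last first.
  by move=> p; rewrite inE.
rewrite big_mkcondr /= !mulr1.
rewrite -(pair_big (mem G) (mem G) (fun x y => if f x * f y == f (x*y)%g then (1:rat) else 0)) /=.
rewrite (eq_bigr (fun x => (#|G|%:R + \sum_(y in G) f x * f y * f (x * y)%g) / 2)); last first.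
  move=> x xG; rewrite (eq_bigr (fun y => (1 + f x * f y * f (x * y)%g) / 2)); last first.
    by move=> y yG; rewrite ind_eq ?hf ?groupM.
  by rewrite -mulr_suml big_split /= sumr_const.
by rewrite -mulr_suml big_split /= sumr_const mulr_natl.
Qed.

Theorem theorem3 (gT : finGroupType) (G H : {group gT}) (phi : gT -> rat) :
  H \subset G ->
  pm1_hom H phi ->
  nontrivial_on H phi ->
  exists f : gT -> rat,
    (forall x, x \in G -> pm1 (f x)) /\
    avg G f = 0 /\
    hom_prob G f >=
      (1 / 2) * (1 + (1 / 2) * (#|H|%:R / #|G|%:R) * (1 - #|('N_G(H))%g|%:R / #|G|%:R)
                 + (#|H|%:R ^+ 2) / (#|G|%:R ^+ 2)).
Proof.
move=> sHG hh [k0 k0H nk0].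
have [hp hm] := hh.
have pk0 : phi k0 = -1 by apply: pm1_neq1 => //; apply: hp.
set B : rat := #|H|%:R ^+ 2 + #|H|%:R * (#|G|%:R - #|('N_G(H))%g|%:R) / 2.
pose S (s : FF gT) := \sum_(x in G) \sum_(y in G) ff H phi s x * ff H phi s y * ff H phi s (x * y)%g.
have sumS : \sum_(s : FF gT) S s = #|FF gT|%:R * \sum_(x in G) \sum_(y in G) Tf H phi x y.
  rewrite /S exchange_big /= mulr_sumr; apply: eq_bigr => x _.
  rewrite exchange_big /= mulr_sumr; apply: eq_bigr => y _.
  exact: pointwise.
have [s hs] : exists s, B <= S s.
  case: (boolP [exists s, B <= S s]) => [/existsP // | /existsPn hn].
  have : \sum_(s : FF gT) S s < \sum_(s : FF gT) B.
    apply: ltr_sum; first by apply/hasP; exists [ffun=> true]; rewrite ?mem_index_enum.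
    by move=> s _; rewrite ltNge hn.
  rewrite sumS sumr_const -[B *+ _]mulr_natl => hlt.
  have := total_bound hh sHG; rewrite -/B => hb.
  have hN : (0 : rat) < #|FF gT|%:R.
    by rewrite ltr0n; apply/card_gt0P; exists [ffun=> true].
  have hb2 := ler_wpM2l (ltW hN) hb.
  exfalso; move: hlt hb2; rewrite -[#|xpredT|]/#|FF gT|.
  move: (_ * B) (_ * \sum_(x in G) _) => a b; lra.
exists (ff H phi s); split; first by move=> x _; apply: ff_pm1.
split.
  rewrite /avg (@sum_flip0 _ _ k0) ?mul0r ?(subsetP sHG) // => x xG.
  rewrite /ff; case: (boolP (x \in H)) => xH.
    by rewrite groupM // hm // pk0 mulN1r.
  rewrite groupMl // (negbTE xH) (@uf_shift _ _ _ _ x) ?mulgK // pk0 mulN1r //.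
rewrite /hom_prob count_eq; last by move=> x _; apply: ff_pm1.
rewrite -/(S s) natrM.
have g0 : (0 : rat) < #|G|%:R by rewrite ltr0n cardG_gt0.
rewrite ler_pdivlMr; last by rewrite mulr_gt0.
rewrite /B in hs.
move: hs g0; move: (S s) (#|G|%:R) (#|H|%:R) (#|('N_G(H))%g|%:R) => Ss g h n hs g0.
rewrite (_ : _ * (g * g) = (g * g + (h ^+ 2 + h * (g - n) / 2)) / 2); first lra.
field; exact: lt0r_neq0.
Qed.
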